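(* Let $G$ be a connected graph of order $n\geq 3$ with maximum degree $\Delta(G)$. Then $px_k(G)\leq \Delta(G)$ for each integer $k$ with $3\leq k\leq n$.
   Context: All graphs are finite, simple, undirected and connected. An edge-coloring of a graph assigns a color to each edge (adjacent edges may receive the same color). A tree in an edge-colored graph is proper if any two adjacent edges of the tree receive different colors. For $S\subseteq V(G)$, an $S$-tree is a subgraph of $G$ that is a tree containing all vertices of $S$. For a connected graph $G$ of order $n$ and an integer $k$ with $2\le k\le n$, an edge-coloring of $G$ is a $k$-proper coloring if for every set $S$ of $k$ vertices of $G$ there exists a proper $S$-tree in $G$. The $k$-proper index $px_k(G)$ is the minimum number of colors used in a $k$-proper coloring of $G$. *)

(* Defs.v *)
From mathcomp Require Import all_boot.
Set Implicit Arguments. Unset Strict Implicit. Unset Printing Implicit Defensive.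

(* A simple graph G on a finite vertex type T is given by an
   adjacency relation e : rel T which is symmetric and irreflexive.  An edge
   is represented as the 2-element vertex set [set x; y]. *)

Definition simple_graph (T : finType) (e : rel T) : Prop :=
  symmetric e /\ irreflexive e.

Definition connected_graph (T : finType) (e : rel T) : Prop :=
  forall x y : T, connect e x y.

Definition is_edge (T : finType) (e : rel T) (A : {set T}) : bool :=
  [exists x, exists y, e x y && (A == [set x; y])].

Definition degree (T : finType) (e : rel T) (v : T) : nat := #|[set u | e v u]|.
Definition max_degree (T : finType) (e : rel T) : nat := \max_(v : T) degree e v.

Definition subgraph (T : finType) (e : rel T) (V : {set T}) (F : {set {set T}}) : Prop :=
  forall A, A \in F -> is_edge e A && (A \subset V).

Definition sub_rel (T : finType) (F : {set {set T}}) : rel T :=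
  fun x y => (x != y) && ([set x; y] \in F).

Definition is_tree (T : finType) (V : {set T}) (F : {set {set T}}) : Prop :=
  V != set0 /\
  (forall x y, x \in V -> y \in V -> connect (sub_rel F) x y) /\
  #|F| = #|V| - 1.

Definition S_tree (T : finType) (e : rel T) (S V : {set T}) (F : {set {set T}}) : Prop :=
  subgraph e V F /\ is_tree V F /\ S \subset V.

(* an edge-coloring is a map from edges to colors (only its values on edges of G
   matter); a subgraph is proper if adjacent (distinct, sharing an endpoint)
   edges get different colors *)
Definition proper_sub (T : finType) (c : {set T} -> nat) (F : {set {set T}}) : Prop :=
  forall A B, A \in F -> B \in F -> A != B -> A :&: B != set0 -> c A != c B.

Definition k_proper_coloring (T : finType) (e : rel T) (k : nat) (c : {set T} -> nat) : Prop :=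
  forall S : {set T}, #|S| = k ->
    exists V F, S_tree e S V F /\ proper_sub c F.

(* px_k(G) <= m  :<->  there is a k-proper coloring of G using at most m colors,
   i.e. (after relabelling) with all edge colors in {0, ..., m-1}. *)
Definition px_le (T : finType) (e : rel T) (k m : nat) : Prop :=
  exists c : {set T} -> nat,
    (forall A, is_edge e A -> c A < m) /\ k_proper_coloring e k c.

(* Main.v *)
Require Import Defs.
From mathcomp Require Import all_boot.
From mathcomp Require Import zify.
Set Implicit Arguments. Unset Strict Implicit. Unset Printing Implicit Defensive.

Definition inv (T : finType) (e : rel T) (D : nat) (V : {set T})
  (F : {set {set T}}) (c : {set T} -> nat) : Prop :=
  [/\ (forall A, A \in F -> is_edge e A && (A \subset V)),
      (forall x y, x \in V -> y \in V -> connect (sub_rel F) x y),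
      #|F| = #|V| - 1,
      (forall A, A \in F -> c A < D) &
      Defs.proper_sub c F].

Lemma crossing (T : finType) (e : rel T) (V : {set T}) :
  symmetric e -> connected_graph e -> V != set0 -> V != setT ->
  exists x y, [/\ x \in V, y \notin V & e x y].
Proof.
move=> sym conn /set0Pn [x0 x0V] VT.
have [z zV] : exists z, z \notin V.
  apply/existsP; move: VT; apply: contraR; rewrite negb_exists => /forallP H.
  apply/eqP/setP => z; rewrite inE; move: (H z); by rewrite negbK.
case: (boolP [exists x, exists y, [&& x \in V, y \notin V & e x y]]).
  by move=> /existsP [x /existsP [y /and3P [? ? ?]]]; exists x, y.
rewrite negb_exists => /forallP H.
have cl : closed e (mem V).
  move=> a b eab.
  have h1 : ~~ [&& a \in V, b \notin V & e a b].
    by apply/negP => Hc; move/negP: (H a); apply; apply/existsP; exists b.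
  have h2 : ~~ [&& b \in V, a \notin V & e b a].
    by apply/negP => Hc; move/negP: (H b); apply; apply/existsP; exists a.
  rewrite sym in h2 |- *.
  move: h1 h2; rewrite eab !andbT /=.
  by case: (a \in V); case: (b \in V).
have := closed_connect cl (conn x0 z).
by rewrite /= x0V (negbTE zV).
Qed.

Lemma extend (T : finType) (e : rel T) (D : nat) V F c :
  simple_graph e -> connected_graph e -> D = max_degree e ->
  inv e D V F c -> V != set0 -> V != setT ->
  exists V' F' c', inv e D V' F' c' /\ #|V'| = #|V|.+1.
Proof.
move=> [sym irr] conn DE [I1 I2 I3 I4 I5] V0 VT.
have [x [y [xV yV exy]]] := crossing sym conn V0 VT.
set N := [set x; y].
have NF : N \notin F.
  apply/negP => /I1 /andP [_ /subsetP sub].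
  by move: (sub y); rewrite !inE eqxx orbT => /(_ isT); rewrite (negbTE yV).
have xy : x != y by apply: contraNneq yV => <-.
set X := [set A in F | x \in A].
set U := [set u | e x u & [set x; u] \in F].
have XU : X \subset [set [set x; u] | u in U].
  apply/subsetP => A; rewrite inE => /andP [AF xA].
  move: (I1 A AF) => /andP [/existsP [a /existsP [b /andP [eab /eqP AE]]] _].
  move: xA; rewrite AE !inE => /orP [] /eqP xe; subst.
    by apply/imsetP; exists b => //; rewrite inE eab AF.
  apply/imsetP; exists a; first by rewrite inE sym eab setUC AF.
  by rewrite setUC.
have Ult : #|U| < #|[set u | e x u]|.
  apply: proper_card; apply/properP; split.
    by apply/subsetP => u; rewrite !inE => /andP [].
  by exists y; rewrite !inE ?exy //= (negbTE NF) andbF.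
have degx : #|[set u | e x u]| <= D by rewrite DE; exact: (leq_bigmax (F:=degree e) x).
have Xlt : #|X| < D.
  apply: leq_ltn_trans (subset_leq_card XU) _.
  apply: leq_ltn_trans (leq_imset_card _ _) _.
  exact: leq_trans Ult degx.
set s := [seq c A | A <- enum X].
have [col colD cols] : exists2 col, col < D & col \notin s.
  have : ~~ all (fun i => i \in s) (iota 0 D).
    apply/negP => /allP H.
    have := uniq_leq_size (iota_uniq 0 D) H.
    by rewrite size_iota size_map -cardE leqNgt Xlt.
  by case/allPn => i; rewrite mem_iota add0n => /andP [_ iD] ?; exists i.
have colok : forall A, A \in F -> x \in A -> c A != col.
  move=> A AF xA; apply: contraNneq cols => <-.
  by apply: map_f; rewrite mem_enum inE AF xA.
exists (y |: V), (N |: F), (fun A => if A == N then col else c A).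
split; last by rewrite cardsU1 yV.
have AFN : forall A, A \in F -> (A == N) = false.
  by move=> A AF; apply/negbTE; apply: contraNneq NF => <-.
have yA : forall A, A \in F -> y \notin A.
  move=> A /I1 /andP [_ /subsetP sub]; apply: contra yV; exact: sub.
split.
- move=> A; rewrite in_setU1 => /orP [/eqP -> | AF].
    apply/andP; split; first by apply/existsP; exists x; apply/existsP; exists y; rewrite exy eqxx.
    by apply/subsetP => z; rewrite !inE => /orP [] /eqP ->; rewrite ?eqxx ?xV ?orbT.
  move: (I1 A AF) => /andP [-> /subsetP sub] /=.
  by apply/subsetP => z /sub zV; rewrite inE zV orbT.
- have sub : forall u v, connect (sub_rel F) u v -> connect (sub_rel (N |: F)) u v.
    move=> u v; apply: connect_sub => a b /andP [ab abF]; apply: connect1.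
    by rewrite /sub_rel /= ab in_setU1 abF orbT.
  have cxy : connect (sub_rel (N |: F)) x y.
    by apply: connect1; rewrite /sub_rel /= xy in_setU1 eqxx.
  have cyx : connect (sub_rel (N |: F)) y x.
    have NE : [set y; x] = N by rewrite /N setUC.
    by apply: connect1; rewrite /sub_rel /= eq_sym xy NE in_setU1 eqxx.
  move=> u v; rewrite !inE => /orP [/eqP -> | uV] /orP [/eqP -> | vV].
  + exact: connect0.
  + exact: connect_trans cyx (sub _ _ (I2 _ _ xV vV)).
  + exact: connect_trans (sub _ _ (I2 _ _ uV xV)) cxy.
  + exact: sub _ _ (I2 _ _ uV vV).
- rewrite !cardsU1 NF yV I3 /=.
  have : 0 < #|V| by apply/card_gt0P; exists x.
  lia.
- move=> A; rewrite in_setU1 => /orP [/eqP -> | AF]; first by rewrite eqxx.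
  by rewrite AFN // I4.
- move=> A B; rewrite !in_setU1 => /orP [/eqP -> | AF] /orP [/eqP -> | BF].
  + by rewrite eqxx.
  + move=> _ NB; rewrite eqxx AFN //.
    have xB : x \in B.
      case/set0Pn: NB => z; rewrite !inE => /andP [/orP [] /eqP -> //].
      by rewrite (negbTE (yA B BF)).
    by rewrite eq_sym colok.
  + move=> _ AN; rewrite eqxx AFN //.
    have xA : x \in A.
      case/set0Pn: AN => z; rewrite !inE => /andP [zA /orP [] /eqP zE]; subst z => //.
      by rewrite (negbTE (yA A AF)) in zA.
    by rewrite colok.
  + by rewrite !AFN //; apply: I5.
Qed.

Theorem mainTheorem11 (T : finType) (e : rel T) :
  simple_graph e -> connected_graph e -> 3 <= #|T| ->
  forall k : nat, 3 <= k <= #|T| -> px_le e k (max_degree e).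
Proof.
move=> sg conn nT k _.
set D := max_degree e.
have [r _] : exists r : T, r \in [set: T] by apply/card_gt0P; rewrite cardsT; lia.
have main : forall m, m < #|T| -> exists V F c, inv e D V F c /\ #|V| = m.+1.
  elim=> [_ | m IH mT].
    exists [set r], set0, (fun _ => 0); split; last by rewrite cards1.
    split => //.
    - by move=> A; rewrite inE.
    - by move=> x y; rewrite !inE => /eqP -> /eqP ->; exact: connect0.
    - by rewrite cards0 cards1.
    - by move=> A; rewrite inE.
    - by move=> A B; rewrite inE.
  have [V [F [c [Hinv HV]]]] := IH (ltnW mT).
  have V0 : V != set0 by apply/set0Pn/card_gt0P; rewrite HV.
  have VT : V != setT by apply/negP => /eqP VT; move: mT; rewrite -HV VT cardsT ltnn.
  have [V' [F' [c' [Hinv' HV']]]] := extend sg conn (erefl D) Hinv V0 VT.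
  by exists V', F', c'; rewrite HV' HV.
have Tm : #|T|.-1 < #|T| by lia.
have [V [F [c [[I1 I2 I3 I4 I5] HV]]]] := main #|T|.-1 Tm.
have VT : V = setT.
  by apply/eqP; rewrite eqEcard subsetT cardsT HV; lia.
subst V.
have [A0 A0F] : exists A, A \in F by apply/card_gt0P; rewrite I3 cardsT; lia.
have D0 : 0 < D by move: (I4 A0 A0F); lia.
exists (fun A => if A \in F then c A else 0); split.
  by move=> A _; case: ifP => // AF; exact: I4.
move=> S _; exists setT, F; split.
  split; first by move=> A AF; rewrite (I1 A AF).
  split; last exact: subsetT.
  split; last by [].
  by apply/set0Pn; exists r; rewrite inE.
by move=> A B AF BF; rewrite AF BF; exact: I5.
Qed.
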